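(* Let $1<p<\infty$, $R>0$, $\alpha\in\mathbb{R}\setminus\{0\}$, and let $w$ be a positive smooth function on $[0,R]$ with $w(0)=1$. Let $\bar\lambda_p([0,R],w,\alpha)$ be the first eigenvalue of $$(p-1)|\varphi'|^{p-2}\varphi''+\frac{w'}{w}|\varphi'|^{p-2}\varphi'=-\lambda|\varphi|^{p-2}\varphi,\quad |\varphi'(0)|^{p-2}\varphi'(0)=\alpha|\varphi(0)|^{p-2}\varphi(0),\quad \varphi'(R)=0,$$ and let $u>0$ be a positive first eigenfunction. Then: (1) if $\alpha>0$, then $u'>0$ on $[0,R)$; (2) if $\alpha<0$, then $u'<0$ on $[0,R)$; (3) if $\alpha>0$ and $0<\bar R<R$, then $\bar\lambda_p([0,R],w,\alpha)<\bar\lambda_p([0,\bar R],w,\alpha)$ (where $w$ is restricted to $[0,\bar R]$). Assume in addition that $w$ is strictly log-concave, i.e. $(\log w)''<0$ on $[0,R)$. Then: (4) if $\alpha>0$, then $u'/u$ is monotone decreasing on $[0,R]$, and in particular $|u'/u|^{p-1}\le\alpha$ on $[0,R]$; (5) if $\alpha<0$, then $u'/u$ is monotone increasing on $[0,R]$, and in particular $|u'/u|^{p-1}\le-\alpha$ on $[0,R]$.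
   Context: The first eigenvalue is characterized by $\bar\lambda_p([0,R],w,\alpha)=\inf\{\int_0^R|u'|^pw\,dt+\alpha|u(0)|^p: u\in W^{1,p}([0,R],w\,dt),\ \int_0^R|u|^pw\,dt=1\}$; its eigenfunctions do not change sign. *)

(* Defs.v *)
From Stdlib Require Import Reals Lra.
Open Scope R_scope.

(* |x|^q, with the convention 0^q = 0 (q > 0 in all uses). *)
Definition apow (q x : R) : R :=
  if Req_EM_T x 0 then 0 else Rpower (Rabs x) q.

(* |x|^{p-2} x, with value 0 at x = 0. *)
Definition spow (p x : R) : R :=
  if Rlt_dec 0 x then Rpower x (p - 1)
  else if Rlt_dec x 0 then - Rpower (- x) (p - 1) else 0.

Definition deriv_on (a b : R) (f f' : R -> R) : Prop :=
  forall x, a <= x <= b ->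
  forall eps, 0 < eps -> exists delta, 0 < delta /\
    forall y, a <= y <= b -> y <> x -> Rabs (y - x) < delta ->
      Rabs ((f y - f x) / (y - x) - f' x) < eps.

Definition cont_on (a b : R) (f : R -> R) : Prop :=
  forall x, a <= x <= b ->
  forall eps, 0 < eps -> exists delta, 0 < delta /\
    forall y, a <= y <= b -> Rabs (y - x) < delta -> Rabs (f y - f x) < eps.

Definition smooth_with (w : R -> R) (D : nat -> R -> R) : Prop :=
  D 0%nat = w /\ forall n x, derivable_pt_lim (D n) x (D (S n) x).

(* Values of the Rayleigh functional
   int_0^R0 |u'|^p w dt + alpha |u(0)|^p  over normalized test functions
   u (taken C^1 on [0,R0], a dense class in W^{1,p}([0,R0], w dt)). *)
Definition rq_set (p R0 : R) (w : R -> R) (alpha : R) (E : R) : Prop :=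
  exists u du : R -> R,
    deriv_on 0 R0 u du /\ cont_on 0 R0 du /\
    exists (pr1 : Riemann_integrable (fun t => apow p (du t) * w t) 0 R0)
           (pr2 : Riemann_integrable (fun t => apow p (u t) * w t) 0 R0),
      RiemannInt pr2 = 1 /\ E = RiemannInt pr1 + alpha * apow p (u 0).

Definition is_inf (S : R -> Prop) (m : R) : Prop :=
  (forall x, S x -> m <= x) /\
  (forall m', (forall x, S x -> m' <= x) -> m' <= m).

Definition first_eigenvalue (p R0 : R) (w : R -> R) (alpha lam : R) : Prop :=
  is_inf (rq_set p R0 w alpha) lam.

(* u (with derivative du) solves, on [0,R0],
   (w |u'|^{p-2} u')' = -lam w |u|^{p-2} u   (divergence form of
   (p-1)|u'|^{p-2}u'' + (w'/w)|u'|^{p-2}u' = -lam |u|^{p-2}u),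
   |u'(0)|^{p-2}u'(0) = alpha |u(0)|^{p-2}u(0),  u'(R0) = 0. *)
Definition eigenfunction (p R0 : R) (w : R -> R) (alpha lam : R)
    (u du : R -> R) : Prop :=
  deriv_on 0 R0 u du /\
  deriv_on 0 R0 (fun t => w t * spow p (du t))
                (fun t => - lam * w t * spow p (u t)) /\
  spow p (du 0) = alpha * spow p (u 0) /\
  du R0 = 0.

(* Main.v *)
Require Import Defs.
From Stdlib Require Import Reals Lra.
From Coquelicot Require Import Coquelicot.
Open Scope R_scope.

Definition clamp (a b x : R) := Rmax a (Rmin b x).

Lemma clamp_in a b x : a <= x <= b -> clamp a b x = x.
Proof. intros. unfold clamp, Rmax, Rmin. repeat destruct Rle_dec; lra. Qed.
Lemma clamp_range a b x : a <= b -> a <= clamp a b x <= b.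
Proof. intros. unfold clamp, Rmax, Rmin. repeat destruct Rle_dec; lra. Qed.
Lemma clamp_lip a b x y : a <= b -> Rabs (clamp a b y - clamp a b x) <= Rabs (y - x).
Proof. intros. unfold clamp, Rmax, Rmin.
  repeat destruct Rle_dec; unfold Rabs; repeat destruct Rcase_abs; lra. Qed.

Definition ext (a b : R) (f f' : R -> R) (x : R) :=
  f (clamp a b x) + f' (clamp a b x) * (x - clamp a b x).

Lemma ext_in a b f f' x : a <= x <= b -> ext a b f f' x = f x.
Proof. intros. unfold ext. rewrite clamp_in by lra. ring. Qed.

Lemma ext_deriv a b f f' x : a < b -> deriv_on a b f f' -> a <= x <= b ->
  derivable_pt_lim (ext a b f f') x (f' x).
Proof.
  intros Hab Hd Hx eps Heps.
  destruct (Hd x Hx eps Heps) as [d0 [Hd0 Hd1]].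
  assert (exists dl, 0 < dl /\ (a < x -> dl <= x - a)) as [dl [Hdl1 Hdl2]].
  { destruct (Rlt_dec a x). exists (x - a); lra. exists 1; lra. }
  assert (exists dr, 0 < dr /\ (x < b -> dr <= b - x)) as [dr [Hdr1 Hdr2]].
  { destruct (Rlt_dec x b). exists (b - x); lra. exists 1; lra. }
  set (d := Rmin d0 (Rmin (b - a) (Rmin dl dr))).
  assert (Hdp : 0 < d).
  { unfold d. repeat apply Rmin_glb_lt; lra. }
  exists (mkposreal d Hdp). simpl. intros h Hh0 Hh.
  assert (Hd0' : d <= d0) by apply Rmin_l.
  assert (Hba : d <= b - a) by (unfold d; eapply Rle_trans; [apply Rmin_r| apply Rmin_l]).
  assert (Hdl : d <= dl) by (unfold d; eapply Rle_trans; [apply Rmin_r|];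
     eapply Rle_trans; [apply Rmin_r| apply Rmin_l]).
  assert (Hdr : d <= dr) by (unfold d; eapply Rle_trans; [apply Rmin_r|];
     eapply Rle_trans; [apply Rmin_r| apply Rmin_r]).
  assert (Hh' : - d < h < d) by (apply Rabs_def2 in Hh; lra).
  rewrite (ext_in a b f f' x) by lra.
  destruct (Rlt_dec (x + h) a) as [Hl|Hl].
  { assert (x = a).
    { destruct (Rlt_dec a x) as [Hax|Hax]; [|lra]. specialize (Hdl2 Hax). lra. }
    subst x. unfold ext.
    assert (clamp a b (a + h) = a) as ->.
    { unfold clamp, Rmax, Rmin. repeat destruct Rle_dec; lra. }
    replace ((f a + f' a * (a + h - a) - f a) / h - f' a) with 0 by (field; auto).
    rewrite Rabs_R0. lra. }
  destruct (Rlt_dec b (x + h)) as [Hr|Hr].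
  { assert (x = b).
    { destruct (Rlt_dec x b) as [Hax|Hax]; [|lra]. specialize (Hdr2 Hax). lra. }
    subst x. unfold ext.
    assert (clamp a b (b + h) = b) as ->.
    { unfold clamp, Rmax, Rmin. repeat destruct Rle_dec; lra. }
    replace ((f b + f' b * (b + h - b) - f b) / h - f' b) with 0 by (field; auto).
    rewrite Rabs_R0. lra. }
  rewrite ext_in by lra.
  replace h with ((x + h) - x) at 2 by ring.
  apply Hd1. lra. lra. replace (x + h - x) with h by ring. lra.
Qed.

Lemma glob_deriv_on a b f F f' :
  (forall x, a <= x <= b -> derivable_pt_lim F x (f' x)) ->
  (forall x, a <= x <= b -> F x = f x) -> deriv_on a b f f'.
Proof.
  intros HF Heq x Hx eps Heps.
  destruct (HF x Hx eps Heps) as [d Hd].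
  exists d. split. apply cond_pos. intros y Hy Hyx Hyd.
  specialize (Hd (y - x)). replace (x + (y - x)) with y in Hd by ring.
  rewrite <- (Heq y Hy), <- (Heq x Hx). apply Hd. lra. auto.
Qed.

Lemma glob_cont_on a b f F :
  (forall x, a <= x <= b -> continuity_pt F x) ->
  (forall x, a <= x <= b -> F x = f x) -> cont_on a b f.
Proof.
  intros HF Heq x Hx eps Heps.
  destruct (HF x Hx eps Heps) as [d [Hd Hd1]].
  exists d. split. auto. intros y Hy Hyd.
  rewrite <- (Heq y Hy), <- (Heq x Hx).
  destruct (Req_dec y x). subst. rewrite Rminus_diag, Rabs_R0; lra.
  apply (Hd1 y). split. split. exact I. auto. exact Hyd.
Qed.

Lemma deriv_on_cont a b f f' : a < b -> deriv_on a b f f' -> cont_on a b f.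
Proof.
  intros Hab Hd. apply (glob_cont_on a b f (ext a b f f')).
  intros x Hx. apply (derivable_continuous_pt _ _ (exist _ _ (ext_deriv a b f f' x Hab Hd Hx))).
  apply ext_in.
Qed.

Lemma cont_clamp a b g x : a <= b -> cont_on a b g -> continuity_pt (fun t => g (clamp a b t)) x.
Proof.
  intros Hab Hg eps Heps.
  destruct (Hg (clamp a b x) (clamp_range a b x Hab) eps Heps) as [d [Hd Hd1]].
  exists d. split. auto. intros y [_ Hy]. simpl in *. unfold R_dist in *.
  apply Hd1. apply clamp_range; auto.
  eapply Rle_lt_trans. apply clamp_lip; auto. auto.
Qed.

Lemma deriv_mono a b f f' : a < b -> deriv_on a b f f' ->
  (forall x, a <= x <= b -> 0 <= f' x) ->
  forall s t, a <= s -> s <= t -> t <= b -> f s <= f t.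
Proof.
  intros Hab Hd Hpos s t Hs Hst Ht.
  destruct (Req_dec s t). subst; lra.
  destruct (MVT_cor2 (ext a b f f') f' s t) as [c [Hc1 Hc2]]. lra.
  intros c Hc. apply ext_deriv; auto; lra.
  rewrite !ext_in in Hc1 by lra.
  assert (0 <= f' c * (t - s)). apply Rmult_le_pos. apply Hpos; lra. lra. lra.
Qed.

Lemma deriv_smono a b f f' : a < b -> deriv_on a b f f' ->
  (forall x, a <= x <= b -> 0 < f' x) ->
  forall s t, a <= s -> s < t -> t <= b -> f s < f t.
Proof.
  intros Hab Hd Hpos s t Hs Hst Ht.
  destruct (MVT_cor2 (ext a b f f') f' s t) as [c [Hc1 Hc2]]. lra.
  intros c Hc. apply ext_deriv; auto; lra.
  rewrite !ext_in in Hc1 by lra.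
  assert (0 < f' c * (t - s)). apply Rmult_lt_0_compat. apply Hpos; lra. lra. lra.
Qed.

Lemma sign_lemma a b y y' : a < b -> deriv_on a b y y' -> y b < 0 ->
  (forall t, a <= t < b -> y t = 0 -> 0 < y' t) ->
  forall t, a <= t <= b -> y t <= 0.
Proof.
  intros Hab Hd Hb Hz t1 Ht1.
  destruct (Rle_dec (y t1) 0) as [|Hpos]; auto. exfalso.
  assert (Hc := deriv_on_cont a b y y' Hab Hd).
  set (E := fun t => t1 <= t <= b /\ 0 <= y t).
  destruct (completeness E) as [m [Hub Hlub]].
  { exists b. intros x [Hx _]. lra. }
  { exists t1. split; lra. }
  assert (Ht1m : t1 <= m) by (apply Hub; split; lra).
  assert (Hmb : m <= b) by (apply Hlub; intros x [Hx _]; lra).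
  assert (Hym : 0 <= y m).
  { destruct (Rle_dec 0 (y m)) as [|Hn]; auto. exfalso.
    destruct (Hc m ltac:(lra) (- y m) ltac:(lra)) as [d [Hd0 Hd1]].
    assert (m <= m - d); [|lra].
    apply Hlub. intros e [He1 He2].
    assert (e <= m) by (apply Hub; split; auto).
    destruct (Rle_dec e (m - d)); auto.
    assert (Rabs (y e - y m) < - y m). apply Hd1. lra.
    rewrite Rabs_left1; lra.
    apply Rabs_def2 in H0. lra. }
  assert (Hmb' : m < b) by (destruct (Req_dec m b); [subst; lra| lra]).
  assert (exists s, m < s <= b /\ 0 < y s) as [s [Hs1 Hs2]].
  { destruct (Req_dec (y m) 0) as [H0|H0].
    - assert (Hp := Hz m ltac:(lra) H0).
      destruct (Hd m ltac:(lra) (y' m) Hp) as [d [Hd0 Hd1]].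
      set (s := m + Rmin d (b - m) / 2).
      assert (Hmin : 0 < Rmin d (b - m)) by (apply Rmin_glb_lt; lra).
      assert (Rmin d (b - m) <= d) by apply Rmin_l.
      assert (Rmin d (b - m) <= b - m) by apply Rmin_r.
      exists s. split. unfold s; lra.
      assert (Hq := Hd1 s ltac:(unfold s; lra) ltac:(unfold s; lra)
         ltac:(unfold s; rewrite Rabs_right; lra)).
      rewrite H0 in Hq. apply Rabs_def2 in Hq. destruct Hq as [_ Hq].
      assert (0 < (y s - 0) / (s - m)) by lra.
      assert (0 < s - m) by (unfold s; lra).
      replace (y s) with ((y s - 0) / (s - m) * (s - m)) by (field; lra).
      apply Rmult_lt_0_compat; auto.
    - destruct (Hc m ltac:(lra) (y m) ltac:(lra)) as [d [Hd0 Hd1]].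
      set (s := m + Rmin d (b - m) / 2).
      assert (Hmin : 0 < Rmin d (b - m)) by (apply Rmin_glb_lt; lra).
      assert (Rmin d (b - m) <= d) by apply Rmin_l.
      assert (Rmin d (b - m) <= b - m) by apply Rmin_r.
      exists s. split. unfold s; lra.
      assert (Hq := Hd1 s ltac:(unfold s; lra)
         ltac:(unfold s; rewrite Rabs_right; lra)).
      apply Rabs_def2 in Hq. lra. }
  assert (s <= m) by (apply Hub; split; lra). lra.
Qed.

Lemma Rpower_pos x q : 0 < Rpower x q.
Proof. unfold Rpower. apply exp_pos. Qed.

Lemma Rpower_split x q : 0 < x -> Rpower x q = Rpower x (q - 1) * x.
Proof. intros. rewrite <- (Rpower_1 x) at 3 by auto. rewrite <- Rpower_plus. f_equal. ring. Qed.

Lemma apow_pos q x : 0 < x -> apow q x = Rpower x q.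
Proof. intros. unfold apow. destruct Req_EM_T. lra. rewrite Rabs_right; lra. Qed.
Lemma apow_neg q x : x < 0 -> apow q x = Rpower (- x) q.
Proof. intros. unfold apow. destruct Req_EM_T. lra. rewrite Rabs_left; lra. Qed.
Lemma apow_0 q : apow q 0 = 0.
Proof. unfold apow. destruct Req_EM_T; lra. Qed.
Lemma spow_pos p x : 0 < x -> spow p x = Rpower x (p - 1).
Proof. intros. unfold spow. destruct Rlt_dec; lra. Qed.
Lemma spow_neg p x : x < 0 -> spow p x = - Rpower (- x) (p - 1).
Proof. intros. unfold spow. destruct Rlt_dec. lra. destruct Rlt_dec; lra. Qed.
Lemma spow_0 p : spow p 0 = 0.
Proof. unfold spow. repeat destruct Rlt_dec; lra. Qed.

Lemma apow_ge0 q x : 0 <= apow q x.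
Proof. unfold apow. destruct Req_EM_T. lra. left; apply Rpower_pos. Qed.

Lemma spow_mul_self p x : spow p x * x = apow p x.
Proof.
  destruct (Rtotal_order x 0) as [H|[H|H]].
  - rewrite spow_neg, apow_neg by auto. rewrite (Rpower_split (-x) p) by lra. ring.
  - subst. rewrite spow_0, apow_0. ring.
  - rewrite spow_pos, apow_pos by auto. rewrite (Rpower_split x p) by lra. ring.
Qed.

Lemma Rpower_inv y c : 0 < y -> Rpower (/ y) c = / Rpower y c.
Proof. intros. unfold Rpower. rewrite ln_Rinv by auto. rewrite <- exp_Ropp. f_equal. ring. Qed.

Lemma Rpower_div x y c : 0 < x -> 0 < y -> Rpower (x / y) c = Rpower x c / Rpower y c.
Proof. intros. unfold Rdiv. rewrite <- Rpower_mult_distr. rewrite Rpower_inv; auto.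
  auto. apply Rinv_0_lt_compat; auto. Qed.

Lemma spow_div p x y : 0 < y -> spow p (x / y) = spow p x / Rpower y (p - 1).
Proof.
  intros Hy. destruct (Rtotal_order x 0) as [H|[H|H]].
  - assert (x / y < 0). { unfold Rdiv. apply Rmult_neg_pos. auto. apply Rinv_0_lt_compat; auto. }
    rewrite !spow_neg by auto. replace (- (x / y)) with ((- x) / y) by (field; lra).
    rewrite Rpower_div by lra. field. apply Rgt_not_eq, Rpower_pos.
  - subst. unfold Rdiv. rewrite Rmult_0_l, spow_0. ring.
  - assert (0 < x / y). { unfold Rdiv. apply Rmult_lt_0_compat. auto. apply Rinv_0_lt_compat; auto. }
    rewrite !spow_pos by auto. rewrite Rpower_div by lra. auto.
Qed.

Lemma apow_div p x y : 0 < y -> apow p (x / y) = apow p x / Rpower y p.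
Proof.
  intros Hy. destruct (Rtotal_order x 0) as [H|[H|H]].
  - assert (x / y < 0). { unfold Rdiv. apply Rmult_neg_pos. auto. apply Rinv_0_lt_compat; auto. }
    rewrite !apow_neg by auto. replace (- (x / y)) with ((- x) / y) by (field; lra).
    rewrite Rpower_div by lra. auto.
  - subst. unfold Rdiv. rewrite Rmult_0_l, apow_0. ring.
  - assert (0 < x / y). { unfold Rdiv. apply Rmult_lt_0_compat. auto. apply Rinv_0_lt_compat; auto. }
    rewrite !apow_pos by auto. rewrite Rpower_div by lra. auto.
Qed.

Lemma apow_spow p x : 1 < p -> apow (p / (p - 1)) (spow p x) = apow p x.
Proof.
  intros Hp. destruct (Rtotal_order x 0) as [H|[H|H]].
  - assert (0 < Rpower (-x) (p-1)) by apply Rpower_pos.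
    rewrite spow_neg by auto. rewrite apow_neg by lra. rewrite (apow_neg p x) by lra.
    rewrite Ropp_involutive, Rpower_mult. f_equal. field. lra.
  - subst. rewrite spow_0, !apow_0. auto.
  - rewrite spow_pos, apow_pos, apow_pos by (auto; apply Rpower_pos).
    rewrite Rpower_mult. f_equal. field. lra.
Qed.

Lemma apow_abs_spow p x : apow (p - 1) x = Rabs (spow p x).
Proof.
  destruct (Rtotal_order x 0) as [H|[H|H]].
  - rewrite spow_neg, apow_neg by auto. rewrite Rabs_Ropp, Rabs_right; auto.
    left; apply Rpower_pos.
  - subst. rewrite spow_0, apow_0, Rabs_R0; auto.
  - rewrite spow_pos, apow_pos by auto. rewrite Rabs_right; auto. left; apply Rpower_pos.
Qed.

Lemma spow_strict p a b : 1 < p -> a < b -> spow p a < spow p b.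
Proof.
  intros Hp Hab.
  assert (Hn : forall x, x < 0 -> spow p x < 0).
  { intros. rewrite spow_neg by auto. assert (0 < Rpower (-x) (p - 1)) by apply Rpower_pos. lra. }
  assert (Hq : forall x, 0 < x -> 0 < spow p x).
  { intros. rewrite spow_pos by auto. apply Rpower_pos. }
  destruct (Rtotal_order a 0) as [Ha|[Ha|Ha]]; destruct (Rtotal_order b 0) as [Hb|[Hb|Hb]];
   subst; try rewrite spow_0; try lra; auto.
  - rewrite !spow_neg by auto. apply Ropp_lt_contravar. apply Rlt_Rpower_l; lra.
  - apply Rlt_trans with 0; auto.
  - rewrite !spow_pos by auto. apply Rlt_Rpower_l; lra.
Qed.

Lemma spow_le_inv p a b : 1 < p -> spow p a <= spow p b -> a <= b.
Proof. intros Hp H. destruct (Rle_dec a b); auto.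
  assert (spow p b < spow p a) by (apply spow_strict; lra). lra. Qed.

Lemma spow_pos_inv p a : 1 < p -> 0 < spow p a -> 0 < a.
Proof. intros Hp H. destruct (Rle_dec a 0) as [H1|]; [|lra].
  destruct H1. assert (spow p a < spow p 0) by (apply spow_strict; auto). rewrite spow_0 in H1. lra.
  subst. rewrite spow_0 in H; lra. Qed.

Lemma spow_neg_inv p a : 1 < p -> spow p a < 0 -> a < 0.
Proof. intros Hp H. destruct (Rle_dec 0 a) as [H1|]; [|lra].
  destruct H1. assert (spow p 0 < spow p a) by (apply spow_strict; auto). rewrite spow_0 in H1. lra.
  subst. rewrite spow_0 in H; lra. Qed.

Lemma deriv_local f g x l : derivable_pt_lim g x l ->
  (exists d, 0 < d /\ forall y, Rabs (y - x) < d -> f y = g y) ->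
  derivable_pt_lim f x l.
Proof.
  intros Hg [d [Hd Heq]] eps Heps.
  destruct (Hg eps Heps) as [d1 Hd1].
  assert (Hm : 0 < Rmin d d1) by (apply Rmin_glb_lt; auto; apply cond_pos).
  exists (mkposreal _ Hm). simpl. intros h Hh0 Hh.
  rewrite !Heq. apply Hd1; auto. eapply Rlt_le_trans; eauto; apply Rmin_r.
  rewrite Rminus_diag, Rabs_R0; auto.
  replace (x + h - x) with h by ring. eapply Rlt_le_trans; eauto; apply Rmin_l.
Qed.

Lemma apow_deriv p x : 1 < p -> derivable_pt_lim (apow p) x (p * spow p x).
Proof.
  intros Hp. destruct (Rtotal_order x 0) as [H|[H|H]].
  - apply deriv_local with (g := fun y => Rpower (- y) p).
    + rewrite spow_neg by auto.
      replace (p * - Rpower (- x) (p - 1)) with ((p * Rpower (- x) (p - 1)) * (-1)) by ring.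
      apply (derivable_pt_lim_comp (fun y => - y) (fun y => Rpower y p)).
      * replace (-1) with (- (1)) by ring. apply derivable_pt_lim_opp, derivable_pt_lim_id.
      * apply derivable_pt_lim_power. lra.
    + exists (- x). split. lra. intros y Hy. apply Rabs_def2 in Hy. apply apow_neg. lra.
  - subst. rewrite spow_0, Rmult_0_r. intros eps Heps.
    assert (Hd : 0 < Rpower eps (/ (p - 1))) by apply Rpower_pos.
    exists (mkposreal _ Hd). simpl. intros h Hh0 Hh.
    rewrite Rplus_0_l, apow_0, Rminus_0_r, Rminus_0_r.
    unfold apow. destruct Req_EM_T. contradiction.
    assert (Ha : 0 < Rabs h) by (apply Rabs_pos_lt; auto).
    rewrite (Rpower_split (Rabs h) p) by auto.
    assert (HX : 0 < Rpower (Rabs h) (p - 1)) by apply Rpower_pos.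
    replace (Rabs (Rpower (Rabs h) (p - 1) * Rabs h / h)) with (Rpower (Rabs h) (p - 1)).
    2:{ set (X := Rpower (Rabs h) (p - 1)) in *. destruct (Rcase_abs h) as [Hn|Hn].
        - rewrite (Rabs_left h) by auto.
          replace (X * - h / h) with (- X) by (field; auto).
          rewrite Rabs_Ropp, Rabs_right; lra.
        - rewrite (Rabs_right h) by auto.
          replace (X * h / h) with X by (field; auto).
          rewrite Rabs_right; lra. }
    replace eps with (Rpower (Rpower eps (/ (p - 1))) (p - 1)).
    apply Rlt_Rpower_l. lra. split; auto.
    rewrite Rpower_mult. replace (/ (p - 1) * (p - 1)) with 1 by (field; lra). apply Rpower_1; auto.
  - apply deriv_local with (g := fun y => Rpower y p).
    + rewrite spow_pos by auto. apply derivable_pt_lim_power. lra.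
    + exists x. split. lra. intros y Hy. apply Rabs_def2 in Hy. apply apow_pos. lra.
Qed.

Lemma apow_cont p x : 1 < p -> continuity_pt (apow p) x.
Proof. intros. apply (derivable_continuous_pt _ _ (exist _ _ (apow_deriv p x H))). Qed.

Lemma dl_mult f g x a b l : derivable_pt_lim f x a -> derivable_pt_lim g x b ->
  l = a * g x + f x * b -> derivable_pt_lim (fun t => f t * g t) x l.
Proof. intros. subst. apply (derivable_pt_lim_mult f g); auto. Qed.
Lemma dl_plus f g x a b l : derivable_pt_lim f x a -> derivable_pt_lim g x b ->
  l = a + b -> derivable_pt_lim (fun t => f t + g t) x l.
Proof. intros. subst. apply (derivable_pt_lim_plus f g); auto. Qed.
Lemma dl_minus f g x a b l : derivable_pt_lim f x a -> derivable_pt_lim g x b ->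
  l = a - b -> derivable_pt_lim (fun t => f t - g t) x l.
Proof. intros. subst. apply (derivable_pt_lim_minus f g); auto. Qed.
Lemma dl_div f g x a b l : derivable_pt_lim f x a -> derivable_pt_lim g x b -> g x <> 0 ->
  l = (a * g x - b * f x) / (g x)^2 -> derivable_pt_lim (fun t => f t / g t) x l.
Proof. intros. subst. replace ((g x)^2) with (Rsqr (g x)) by (unfold Rsqr; ring).
  apply (derivable_pt_lim_div f g); auto. Qed.
Lemma dl_comp h f x a b l : derivable_pt_lim f x a -> derivable_pt_lim h (f x) b ->
  l = b * a -> derivable_pt_lim (fun t => h (f t)) x l.
Proof. intros. subst. apply (derivable_pt_lim_comp f h); auto. Qed.
Lemma dl_const c x l : l = 0 -> derivable_pt_lim (fun _ => c) x l.
Proof. intros. subst. apply derivable_pt_lim_const. Qed.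
Lemma dl_id x l : l = 1 -> derivable_pt_lim (fun t => t) x l.
Proof. intros. subst. apply derivable_pt_lim_id. Qed.
Lemma dl_scal c f x a l : derivable_pt_lim f x a -> l = c * a ->
  derivable_pt_lim (fun t => c * f t) x l.
Proof. intros. eapply dl_mult. apply (dl_const c x 0); auto. eauto. subst; ring. Qed.

Definition zz p (u du : R -> R) t := spow p (du t) / Rpower (u t) (p - 1).
Definition Yf p lam (D : nat -> R -> R) (w u du : R -> R) t :=
  - lam - D 1%nat t / w t * zz p u du t - (p - 1) * apow (p / (p - 1)) (zz p u du t).

Lemma w_deriv w D x : smooth_with w D -> derivable_pt_lim w x (D 1%nat x).
Proof. intros [H0 H]. rewrite <- H0. apply H. Qed.

Lemma zz_alg p u d : 1 < p -> 0 < u ->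
  apow (p / (p - 1)) (spow p d / Rpower u (p - 1)) = spow p d * d / (Rpower u (p - 1 - 1) * u * u).
Proof.
  intros Hp Hu. rewrite <- spow_div by auto. rewrite apow_spow by auto.
  rewrite apow_div by auto. rewrite <- spow_mul_self.
  rewrite (Rpower_split u p) by auto. rewrite (Rpower_split u (p - 1)) by auto. auto.
Qed.

Lemma zz_deriv p R0 alpha w D lam u du :
  1 < p -> 0 < R0 -> smooth_with w D -> (forall t, 0 <= t <= R0 -> 0 < w t) ->
  eigenfunction p R0 w alpha lam u du -> (forall t, 0 <= t <= R0 -> 0 < u t) ->
  deriv_on 0 R0 (zz p u du) (Yf p lam D w u du).
Proof.
  intros Hp HR hw hwpos [Hud [HG [Hbc HRb]]] hupos.
  apply glob_deriv_on with (F := fun t =>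
     ext 0 R0 (fun t => w t * spow p (du t)) (fun t => - lam * w t * spow p (u t)) t
     / (w t * Rpower (ext 0 R0 u du t) (p - 1))).
  - intros x Hx.
    assert (Hu := hupos x Hx). assert (Hw := hwpos x Hx).
    assert (HQ : 0 < Rpower (u x) (p - 1 - 1)) by apply Rpower_pos.
    eapply dl_div.
    + apply ext_deriv; eauto.
    + eapply dl_mult. apply (w_deriv w D x hw).
      eapply (dl_comp (fun y => Rpower y (p - 1)) (ext 0 R0 u du)). apply ext_deriv; eauto.
      apply derivable_pt_lim_power. rewrite ext_in; auto. reflexivity. reflexivity.
    + rewrite ext_in by auto. apply Rgt_not_eq. apply Rmult_lt_0_compat; auto. apply Rpower_pos.
    + rewrite !ext_in by auto. unfold Yf, zz. rewrite zz_alg by auto.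
      rewrite (spow_pos p (u x)) by auto.
      rewrite (Rpower_split (u x) (p - 1)) by auto.
      field. repeat split; lra.
  - intros x Hx. rewrite !ext_in by auto. unfold zz. field. split.
    apply Rgt_not_eq, Rpower_pos. apply Rgt_not_eq, hwpos; auto.
Qed.

Definition Yp p lam (D : nat -> R -> R) (w u du : R -> R) t :=
  - ((D 2%nat t * w t - D 1%nat t * D 1%nat t) / (w t)^2) * zz p u du t
  - D 1%nat t / w t * Yf p lam D w u du t
  - (p - 1) * ((p / (p - 1)) * spow (p / (p - 1)) (zz p u du t)) * Yf p lam D w u du t.

Lemma Y_deriv p R0 alpha w D lam u du :
  1 < p -> 0 < R0 -> smooth_with w D -> (forall t, 0 <= t <= R0 -> 0 < w t) ->
  eigenfunction p R0 w alpha lam u du -> (forall t, 0 <= t <= R0 -> 0 < u t) ->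
  deriv_on 0 R0 (Yf p lam D w u du) (Yp p lam D w u du).
Proof.
  intros Hp HR hw hwpos hu hupos.
  assert (Hz := zz_deriv p R0 alpha w D lam u du Hp HR hw hwpos hu hupos).
  assert (Hq : 1 < p / (p - 1)).
  { apply (Rmult_lt_reg_r (p - 1)). lra. field_simplify; lra. }
  apply glob_deriv_on with (F := fun t =>
     - lam - D 1%nat t / w t * ext 0 R0 (zz p u du) (Yf p lam D w u du) t
     - (p - 1) * apow (p / (p - 1)) (ext 0 R0 (zz p u du) (Yf p lam D w u du) t)).
  - intros x Hx.
    assert (Hw := hwpos x Hx).
    destruct hw as [HD0 HD].
    eapply dl_minus. eapply dl_minus. apply dl_const; reflexivity.
    eapply dl_mult. eapply dl_div. apply HD. apply (w_deriv w D x (conj HD0 HD)). lra. reflexivity.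
    apply ext_deriv; eauto. reflexivity. reflexivity.
    eapply dl_scal. eapply (dl_comp (apow (p / (p - 1)))). apply ext_deriv; eauto.
    apply apow_deriv; auto. reflexivity. reflexivity.
    rewrite !ext_in by auto. unfold Yp. simpl. field. lra.
  - intros x Hx. rewrite !ext_in by auto. reflexivity.
Qed.

Lemma deriv_on_scal a b c f f' : deriv_on a b f f' ->
  deriv_on a b (fun t => c * f t) (fun t => c * f' t).
Proof.
  intros H x Hx eps Heps.
  destruct (Req_dec c 0).
  { subst. exists 1. split. lra. intros. replace ((0 * f y - 0 * f x) / (y - x) - 0 * f' x) with 0
      by (field; lra). rewrite Rabs_R0; lra. }
  assert (Hc : 0 < Rabs c) by (apply Rabs_pos_lt; auto).
  destruct (H x Hx (eps / Rabs c)) as [d [Hd Hd1]].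
  { apply Rdiv_lt_0_compat; auto. }
  exists d. split; auto. intros y Hy Hyx Hyd.
  replace ((c * f y - c * f x) / (y - x) - c * f' x) with (c * ((f y - f x) / (y - x) - f' x))
    by (field; lra).
  rewrite Rabs_mult. specialize (Hd1 y Hy Hyx Hyd).
  apply (Rmult_lt_compat_l (Rabs c)) in Hd1; auto.
  replace (Rabs c * (eps / Rabs c)) with eps in Hd1 by (field; lra). auto.
Qed.

Lemma part12 p R0 alpha w D lam u du :
  1 < p -> 0 < R0 -> smooth_with w D -> (forall t, 0 <= t <= R0 -> 0 < w t) ->
  w 0 = 1 ->
  eigenfunction p R0 w alpha lam u du -> (forall t, 0 <= t <= R0 -> 0 < u t) ->
  (0 < alpha -> 0 < lam /\ forall t, 0 <= t < R0 -> 0 < du t) /\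
  (alpha < 0 -> lam < 0 /\ forall t, 0 <= t < R0 -> du t < 0).
Proof.
  intros Hp HR hw hwpos hw0 [Hud [HG [Hbc HRb]]] hupos.
  set (G := fun t => w t * spow p (du t)).
  assert (HG0 : G 0 = alpha * Rpower (u 0) (p - 1)).
  { unfold G. rewrite hw0, Hbc, spow_pos by (apply hupos; lra). ring. }
  assert (HGR : G R0 = 0).
  { unfold G. rewrite HRb, spow_0. ring. }
  assert (Hsu : forall t, 0 <= t <= R0 -> spow p (u t) = Rpower (u t) (p - 1)).
  { intros. apply spow_pos, hupos; auto. }
  assert (Hpos0 : 0 < Rpower (u 0) (p - 1)) by apply Rpower_pos.
  assert (HmG := deriv_on_scal _ _ (-1) _ _ HG).
  split.
  - intros Ha.
    assert (Hl : 0 < lam).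
    { destruct (Rlt_dec 0 lam); auto. exfalso.
      assert (G 0 <= G R0).
      { apply (deriv_mono 0 R0 G _ HR HG); try lra.
        intros x Hx. rewrite Hsu by auto.
        assert (0 < w x) by auto. assert (0 < Rpower (u x) (p - 1)) by apply Rpower_pos.
        assert (0 <= - lam * w x) by nra. nra. }
      rewrite HG0, HGR in H. nra. }
    split; auto. intros t Ht.
    assert (- 1 * G t < -1 * G R0).
    { apply (deriv_smono 0 R0 (fun t => -1 * G t) _ HR HmG); try lra.
      intros x Hx. rewrite Hsu by auto.
      assert (0 < w x) by auto. assert (0 < Rpower (u x) (p - 1)) by apply Rpower_pos.
      assert (0 < lam * w x) by nra. nra. }
    rewrite HGR in H. unfold G in H.
    assert (0 < w t) by (apply hwpos; lra).
    apply (spow_pos_inv p); auto. nra.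
  - intros Ha.
    assert (Hl : lam < 0).
    { destruct (Rlt_dec lam 0); auto. exfalso.
      assert (-1 * G 0 <= -1 * G R0).
      { apply (deriv_mono 0 R0 _ _ HR HmG); try lra.
        intros x Hx. rewrite Hsu by auto.
        assert (0 < w x) by auto. assert (0 < Rpower (u x) (p - 1)) by apply Rpower_pos.
        assert (0 <= lam * w x) by nra. nra. }
      rewrite HG0, HGR in H. nra. }
    split; auto. intros t Ht.
    assert (G t < G R0).
    { apply (deriv_smono 0 R0 G _ HR HG); try lra.
      intros x Hx. rewrite Hsu by auto.
      assert (0 < w x) by auto. assert (0 < Rpower (u x) (p - 1)) by apply Rpower_pos.
      assert (0 < - lam * w x) by nra. nra. }
    rewrite HGR in H. unfold G in H.
    assert (0 < w t) by (apply hwpos; lra).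
    apply (spow_neg_inv p); auto. nra.
Qed.

Lemma zz_mono p R0 alpha w D lam u du s :
  1 < p -> 0 < R0 -> smooth_with w D -> (forall t, 0 <= t <= R0 -> 0 < w t) ->
  eigenfunction p R0 w alpha lam u du -> (forall t, 0 <= t <= R0 -> 0 < u t) ->
  (forall t, 0 <= t < R0 -> D 2%nat t / w t - (D 1%nat t / w t) ^ 2 < 0) ->
  (s = 1 \/ s = -1) -> 0 < s * lam -> (forall t, 0 <= t < R0 -> 0 < s * du t) ->
  forall s0 t, 0 <= s0 <= t -> t <= R0 -> s * zz p u du t <= s * zz p u du s0.
Proof.
  intros Hp HR hw hwpos hu hupos hlc Hs Hsl Hsd.
  assert (HY := Y_deriv p R0 alpha w D lam u du Hp HR hw hwpos hu hupos).
  assert (HZ := zz_deriv p R0 alpha w D lam u du Hp HR hw hwpos hu hupos).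
  assert (HsY := deriv_on_scal _ _ s _ _ HY).
  assert (Hzz0 : zz p u du R0 = 0).
  { destruct hu as [_ [_ [_ HRb]]]. unfold zz. rewrite HRb, spow_0. unfold Rdiv; ring. }
  assert (Hneg : forall t, 0 <= t <= R0 -> s * Yf p lam D w u du t <= 0).
  { apply (sign_lemma 0 R0 _ _ HR HsY).
    - unfold Yf. rewrite Hzz0, apow_0. lra.
    - intros t Ht Hz.
      assert (Hy0 : Yf p lam D w u du t = 0) by (destruct Hs; subst; lra).
      unfold Yp. rewrite Hy0.
      assert (Hw : 0 < w t) by (apply hwpos; lra).
      assert (HK : (D 2%nat t * w t - D 1%nat t * D 1%nat t) / (w t)^2 < 0).
      { replace ((D 2%nat t * w t - D 1%nat t * D 1%nat t) / (w t)^2)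
          with (D 2%nat t / w t - (D 1%nat t / w t) ^ 2) by (field; lra). apply hlc; auto. }
      assert (Hszz : 0 < s * zz p u du t).
      { unfold zz. assert (HP : 0 < Rpower (u t) (p - 1)) by apply Rpower_pos.
        assert (H1 := Hsd t Ht).
        destruct Hs; subst.
        - assert (0 < spow p (du t)).
          { rewrite spow_pos by lra. apply Rpower_pos. }
          assert (0 < spow p (du t) / Rpower (u t) (p - 1)) by (apply Rdiv_lt_0_compat; auto). lra.
        - assert (0 < - spow p (du t)).
          { rewrite spow_neg by lra. assert (0 < Rpower (- du t) (p - 1)) by apply Rpower_pos. lra. }
          assert (0 < - spow p (du t) / Rpower (u t) (p - 1)) by (apply Rdiv_lt_0_compat; auto).
          unfold Rdiv in *. lra. }
      nra. }
  assert (HmZ := deriv_on_scal _ _ (- s) _ _ HZ).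
  intros s0 t Hs0 Ht.
  assert (- s * zz p u du s0 <= - s * zz p u du t); [|lra].
  apply (deriv_mono 0 R0 _ _ HR HmZ); try lra.
  intros x Hx. specialize (Hneg x Hx). lra.
Qed.

Lemma exp_convex th a b : 0 <= th <= 1 ->
  exp (th * a + (1 - th) * b) <= th * exp a + (1 - th) * exp b.
Proof.
  intros Hth. set (c := th * a + (1 - th) * b).
  assert (Ha : exp a = exp c * exp (a - c)) by (rewrite <- exp_plus; f_equal; ring).
  assert (Hb : exp b = exp c * exp (b - c)) by (rewrite <- exp_plus; f_equal; ring).
  assert (H1 := exp_ineq1_le (a - c)). assert (H2 := exp_ineq1_le (b - c)).
  assert (Hc := exp_pos c).
  rewrite Ha, Hb.
  assert (th * (exp c * (1 + (a - c))) + (1 - th) * (exp c * (1 + (b - c))) = exp c).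
  { unfold c. ring. }
  assert (exp c * (1 + (a - c)) <= exp c * exp (a - c)) by (apply Rmult_le_compat_l; lra).
  assert (exp c * (1 + (b - c)) <= exp c * exp (b - c)) by (apply Rmult_le_compat_l; lra).
  nra.
Qed.

Lemma apow_mult q a b : apow q (a * b) = apow q a * apow q b.
Proof.
  unfold apow. destruct (Req_EM_T a 0) as [Ha|Ha]; destruct (Req_EM_T b 0) as [Hb|Hb];
  destruct (Req_EM_T (a * b) 0) as [Hab|Hab]; try ring; try (subst; exfalso; apply Hab; ring).
  - exfalso. apply Rmult_integral in Hab. lra.
  - rewrite Rabs_mult. rewrite Rpower_mult_distr; auto; apply Rabs_pos_lt; auto.
Qed.

Lemma apow_mono q a b : 0 < q -> 0 <= a <= b -> apow q a <= apow q b.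
Proof.
  intros Hq [Ha Hab]. destruct Ha.
  - rewrite !apow_pos by lra. apply Rle_Rpower_l; lra.
  - subst. rewrite apow_0. apply apow_ge0.
Qed.

Lemma young p m y : 1 < p ->
  p * m * y <= apow p y + (p - 1) * apow (p / (p - 1)) m.
Proof.
  intros Hp.
  assert (H0 := apow_ge0 p y). assert (H1 := apow_ge0 (p / (p - 1)) m).
  destruct (Req_dec m 0). { subst. nra. }
  destruct (Req_dec y 0). { subst. nra. }
  assert (Hm : 0 < Rabs m) by (apply Rabs_pos_lt; auto).
  assert (Hy : 0 < Rabs y) by (apply Rabs_pos_lt; auto).
  assert (m * y <= Rabs m * Rabs y).
  { rewrite <- Rabs_mult. apply Rle_abs. }
  set (q := p / (p - 1)).
  assert (Hpq : / p + / q = 1) by (unfold q; field; lra).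
  assert (Hq : 0 < q) by (unfold q; apply Rdiv_lt_0_compat; lra).
  assert (Rabs m * Rabs y <= / p * apow p y + / q * apow q m).
  { unfold apow. destruct Req_EM_T; [lra|]. destruct Req_EM_T; [lra|].
    unfold Rpower.
    replace (Rabs m * Rabs y) with (exp (/ p * (p * ln (Rabs y)) + (1 - / p) * (q * ln (Rabs m)))).
    replace (/ q) with (1 - / p) by lra. apply exp_convex.
    split. left; apply Rinv_0_lt_compat; lra. left. rewrite <- Rinv_1. apply Rinv_lt_contravar; lra.
    replace (/ p * (p * ln (Rabs y)) + (1 - / p) * (q * ln (Rabs m))) with (ln (Rabs y) + ln (Rabs m)).
    rewrite exp_plus, !exp_ln by auto. ring.
    replace (1 - / p) with (/ q) by lra. field. lra. }
  assert (HH : p * (m * y) <= p * (/ p * apow p y + / q * apow q m)) by (apply Rmult_le_compat_l; lra).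
  replace (p * (/ p * apow p y + / q * apow q m)) with (apow p y + (p - 1) * apow q m) in HH
    by (unfold q; field; lra).
  replace (p * m * y) with (p * (m * y)) by ring. exact HH.
Qed.

Lemma integral_bound a b f H H' (pr : Riemann_integrable f a b) : a < b ->
  cont_on a b f -> deriv_on a b H H' -> (forall x, a <= x <= b -> H' x <= f x) ->
  H b - H a <= RiemannInt pr.
Proof.
  intros Hab Hf HH Hle.
  set (fc := fun t => f (clamp a b t)).
  assert (Hc : forall t, continuity_pt fc t) by (intros; apply cont_clamp; auto; lra).
  assert (Hc' : forall t, continuous fc t) by (intros; apply continuity_pt_filterlim; auto).
  assert (Hex : forall t, ex_RInt fc a t) by (intros; apply (@ex_RInt_continuous R_CompleteNormedModule); auto).
  set (K := fun t => RInt fc a t - ext a b H H' t).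
  assert (HK : deriv_on a b K (fun x => f x - H' x)).
  { apply glob_deriv_on with (F := K); [|auto].
    intros x Hx. unfold K. eapply dl_minus.
    - apply is_derive_Reals. apply (is_derive_RInt fc (RInt fc a) a x).
      + apply filter_forall. intros y. apply (@RInt_correct R_CompleteNormedModule). auto.
      + auto.
    - apply ext_deriv; auto.
    - unfold fc. rewrite clamp_in by auto. reflexivity. }
  assert (K a <= K b).
  { apply (deriv_mono a b K _ Hab HK); try lra. intros x Hx. specialize (Hle x Hx). lra. }
  unfold K in H0. rewrite RInt_point in H0. rewrite !ext_in in H0 by lra.
  rewrite <- (RInt_Reals f a b pr).
  rewrite (RInt_ext f fc). unfold zero in H0; simpl in H0. lra.
  intros x Hx. unfold fc. rewrite clamp_in; auto.
  rewrite Rmin_left, Rmax_right in Hx; lra.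
Qed.

Lemma cp_mult f g x : continuity_pt f x -> continuity_pt g x -> continuity_pt (fun t => f t * g t) x.
Proof. intros. apply (continuity_pt_mult f g); auto. Qed.
Lemma cp_plus f g x : continuity_pt f x -> continuity_pt g x -> continuity_pt (fun t => f t + g t) x.
Proof. intros. apply (continuity_pt_plus f g); auto. Qed.
Lemma cp_const c x : continuity_pt (fun _ => c) x.
Proof. apply continuity_pt_const. intros a b; auto. Qed.
Lemma cp_comp h f x : continuity_pt f x -> continuity_pt h (f x) -> continuity_pt (fun t => h (f t)) x.
Proof. intros. apply (continuity_pt_comp f h); auto. Qed.
Lemma cp_div f g x : continuity_pt f x -> continuity_pt g x -> g x <> 0 -> continuity_pt (fun t => f t / g t) x.
Proof. intros. apply (continuity_pt_div f g); auto. Qed.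
Lemma cp_deriv f x l : derivable_pt_lim f x l -> continuity_pt f x.
Proof. intros. apply (derivable_continuous_pt _ _ (exist _ _ H)). Qed.

Lemma part3 p R0 alpha w D lam u du Rb lamb :
  1 < p -> 0 < R0 -> smooth_with w D -> (forall t, 0 <= t <= R0 -> 0 < w t) ->
  w 0 = 1 ->
  eigenfunction p R0 w alpha lam u du -> (forall t, 0 <= t <= R0 -> 0 < u t) ->
  0 < alpha -> 0 < Rb < R0 -> first_eigenvalue p Rb w alpha lamb -> lam < lamb.
Proof.
  intros Hp HR hw hwpos hw0 hu hupos Ha HRb hlamb.
  destruct (part12 p R0 alpha w D lam u du Hp HR hw hwpos hw0 hu hupos) as [[Hl Hdu] _]. auto.
  assert (Zd := zz_deriv p R0 alpha w D lam u du Hp HR hw hwpos hu hupos).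
  set (Z := ext 0 R0 (zz p u du) (Yf p lam D w u du)).
  assert (HZd : forall x, 0 <= x <= R0 -> derivable_pt_lim Z x (Yf p lam D w u du x)).
  { intros. apply ext_deriv; auto. }
  assert (HZe : forall x, 0 <= x <= R0 -> Z x = zz p u du x) by (intros; apply ext_in; auto).
  assert (Hzpos : forall t, 0 <= t <= Rb -> 0 < zz p u du t).
  { intros t Ht. unfold zz. apply Rdiv_lt_0_compat. rewrite spow_pos by (apply Hdu; lra).
    apply Rpower_pos. apply Rpower_pos. }
  destruct (continuity_ab_min Z 0 Rb) as [mx [Hmx1 Hmx2]]. lra.
  { intros c Hc. apply (cp_deriv _ _ _ (HZd c ltac:(lra))). }
  set (mz := Z mx).
  assert (Hmz : 0 < mz) by (unfold mz; rewrite HZe by lra; apply Hzpos; auto).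
  assert (Hmzle : forall t, 0 <= t <= Rb -> mz <= zz p u du t).
  { intros. rewrite <- HZe by lra. apply Hmx1; auto. }
  destruct hw as [HD0 HD].
  assert (Hwd : forall x, derivable_pt_lim w x (D 1%nat x)) by (intros; rewrite <- HD0; apply HD).
  destruct (continuity_ab_maj (fun t => Rabs (D 1%nat t / w t)) 0 Rb) as [Mx [HMx1 HMx2]]. lra.
  { intros c Hc. apply cp_comp. apply cp_div. apply (cp_deriv _ _ _ (HD 1%nat c)).
    apply (cp_deriv _ _ _ (Hwd c)). apply Rgt_not_eq, hwpos; lra. apply Rcontinuity_abs. }
  set (M := Rabs (D 1%nat Mx / w Mx)).
  assert (HM0 : 0 <= M) by apply Rabs_pos.
  set (A := M + 1). assert (HA : 1 <= A) by (unfold A; lra).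
  set (delta := mz / (2 * exp (A * Rb))).
  assert (Hexp := exp_pos (A * Rb)).
  assert (Hdel : 0 < delta) by (unfold delta; apply Rdiv_lt_0_compat; lra).
  assert (Hlt : lam < lam + delta) by lra.
  apply Rlt_le_trans with (lam + delta); auto.
  destruct hlamb as [_ Hglb]. apply Hglb.
  intros E [v [dv [Hv [Hdvc [pr1 [pr2 [Hn HE]]]]]]].
  set (k := fun t => zz p u du t - delta * exp (A * t)).
  set (H := fun t => w t * k t * apow p (v t)).
  set (H' := fun t => (D 1%nat t * k t + w t * (Yf p lam D w u du t - delta * (exp (A * t) * A)))
                        * apow p (v t) + w t * k t * (p * spow p (v t) * dv t)).
  assert (HHd : deriv_on 0 Rb H H').
  { apply glob_deriv_on with (F := fun t => w t * (Z t - delta * exp (A * t)) * apow p (ext 0 Rb v dv t)).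
    - intros x Hx. eapply dl_mult. eapply dl_mult. apply Hwd.
      eapply dl_minus. apply HZd. lra. eapply dl_scal.
      eapply (dl_comp exp (fun t => A * t)). eapply dl_scal. apply dl_id. reflexivity. reflexivity.
      apply derivable_pt_lim_exp. reflexivity. reflexivity. reflexivity. reflexivity.
      eapply (dl_comp (apow p) (ext 0 Rb v dv)). apply ext_deriv; auto. lra.
      apply apow_deriv; auto. reflexivity.
      unfold H', k. rewrite !ext_in by lra. rewrite HZe by lra. ring.
    - intros x Hx. unfold H, k. rewrite ext_in by auto. rewrite HZe by lra. reflexivity. }
  set (f := fun t => apow p (dv t) * w t + - (lam + delta) * (apow p (v t) * w t)).
  set (pr := RiemannInt_P10 (- (lam + delta)) pr1 pr2 : Riemann_integrable f 0 Rb).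
  assert (Hpr : RiemannInt pr = RiemannInt pr1 + - (lam + delta) * RiemannInt pr2)
    by apply RiemannInt_P13.
  assert (Hvc := deriv_on_cont 0 Rb v dv ltac:(lra) Hv).
  assert (Hfc : cont_on 0 Rb f).
  { apply glob_cont_on with (F := fun t => apow p (dv (clamp 0 Rb t)) * w t
        + - (lam + delta) * (apow p (v (clamp 0 Rb t)) * w t)).
    - intros x Hx. apply cp_plus. apply cp_mult.
      apply (cp_comp (apow p) (fun t => dv (clamp 0 Rb t))). apply cont_clamp; auto; lra.
      apply apow_cont; auto. apply (cp_deriv _ _ _ (Hwd x)).
      apply cp_mult. apply cp_const. apply cp_mult.
      apply (cp_comp (apow p) (fun t => v (clamp 0 Rb t))). apply cont_clamp; auto; lra.
      apply apow_cont; auto. apply (cp_deriv _ _ _ (Hwd x)).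
    - intros x Hx. unfold f. rewrite clamp_in by auto. reflexivity. }
  assert (Hpt : forall x, 0 <= x <= Rb -> H' x <= f x).
  { intros x Hx.
    assert (HW : 0 < w x) by (apply hwpos; lra).
    assert (Hex1 : 1 <= exp (A * x)).
    { assert (H1 := exp_ineq1_le (A * x)). assert (0 <= A * x) by (apply Rmult_le_pos; lra). lra. }
    assert (Hex2 : exp (A * x) <= exp (A * Rb)).
    { destruct (Req_dec x Rb). subst; lra. left. apply exp_increasing.
      apply Rmult_lt_compat_l; lra. }
    assert (HkZ : 0 <= k x <= zz p u du x).
    { unfold k. assert (Hz := Hmzle x Hx).
      assert (delta * exp (A * x) <= delta * exp (A * Rb)) by (apply Rmult_le_compat_l; lra).
      assert (delta * exp (A * Rb) = mz / 2) by (unfold delta; field; lra).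
      assert (0 < delta * exp (A * x)) by (apply Rmult_lt_0_compat; lra). lra. }
    assert (HD1 : - M <= D 1%nat x / w x).
    { assert (Habs := HMx1 x Hx). simpl in Habs. fold M in Habs.
      assert (Rabs (D 1%nat x / w x) >= - (D 1%nat x / w x)).
      { rewrite <- Rabs_Ropp. apply Rle_ge, Rle_abs. } lra. }
    assert (HT3 : 1 <= exp (A * x) * (A + D 1%nat x / w x)).
    { assert (1 <= A + D 1%nat x / w x) by (unfold A; lra). nra. }
    set (q := p / (p - 1)).
    assert (Hq : 0 < q) by (unfold q; apply Rdiv_lt_0_compat; lra).
    assert (HY := young p (k x * spow p (v x)) (dv x) Hp).
    fold q in HY. rewrite apow_mult in HY. unfold q in HY. rewrite apow_spow in HY by auto. fold q in HY.
    assert (HT2 : apow q (k x) <= apow q (zz p u du x)) by (apply apow_mono; auto).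
    assert (HV := apow_ge0 p (v x)).
    assert (Hfh : f x - H' x = w x * (apow p (dv x) - p * (k x * spow p (v x)) * dv x)
        + w x * apow p (v x) * ((p - 1) * apow q (zz p u du x)
        + delta * (exp (A * x) * (A + D 1%nat x / w x) - 1))).
    { unfold f, H', k, Yf. fold q. field. lra. }
    assert (0 <= w x * apow p (v x) * ((p - 1) * (apow q (zz p u du x) - apow q (k x)))).
    { apply Rmult_le_pos. apply Rmult_le_pos; lra. apply Rmult_le_pos; lra. }
    assert (0 <= w x * apow p (v x) * (delta * (exp (A * x) * (A + D 1%nat x / w x) - 1))).
    { apply Rmult_le_pos. apply Rmult_le_pos; lra. apply Rmult_le_pos; lra. }
    assert (w x * (- ((p - 1) * (apow q (k x) * apow p (v x)))) <=
            w x * (apow p (dv x) - p * (k x * spow p (v x)) * dv x)).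
    { apply Rmult_le_compat_l; lra. }
    nra. }
  assert (HB := integral_bound 0 Rb f H H' pr ltac:(lra) Hfc HHd Hpt).
  rewrite Hpr, Hn in HB.
  assert (HHR : 0 <= H Rb).
  { unfold H. assert (0 < w Rb) by (apply hwpos; lra).
    assert (0 <= k Rb).
    { unfold k. assert (Hz := Hmzle Rb ltac:(lra)).
      assert (delta * exp (A * Rb) = mz / 2) by (unfold delta; field; lra). lra. }
    assert (HV := apow_ge0 p (v Rb)).
    apply Rmult_le_pos; auto. apply Rmult_le_pos; lra. }
  assert (HH0 : H 0 = (alpha - delta) * apow p (v 0)).
  { unfold H, k. rewrite hw0. rewrite Rmult_0_r, exp_0.
    destruct hu as [_ [_ [Hbc _]]]. unfold zz. rewrite Hbc.
    rewrite spow_pos by (apply hupos; lra). field. apply Rgt_not_eq, Rpower_pos. }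
  assert (HV0 := apow_ge0 p (v 0)).
  rewrite HE. nra.
Qed.

Theorem proposition2p1
  (p R0 alpha : R) (w : R -> R) (D : nat -> R -> R) (lam : R) (u du : R -> R)
  (hp : 1 < p) (hR : 0 < R0) (halpha : alpha <> 0)
  (hw : smooth_with w D) (hwpos : forall t, 0 <= t <= R0 -> 0 < w t)
  (hw0 : w 0 = 1)
  (hlam : first_eigenvalue p R0 w alpha lam)
  (hu : eigenfunction p R0 w alpha lam u du)
  (hupos : forall t, 0 <= t <= R0 -> 0 < u t) :
  (0 < alpha -> forall t, 0 <= t < R0 -> 0 < du t) /\
  (alpha < 0 -> forall t, 0 <= t < R0 -> du t < 0) /\
  (0 < alpha -> forall Rb lamb, 0 < Rb < R0 ->
     first_eigenvalue p Rb w alpha lamb -> lam < lamb) /\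
  ((forall t, 0 <= t < R0 -> D 2%nat t / w t - (D 1%nat t / w t) ^ 2 < 0) ->
     (0 < alpha ->
        (forall s t, 0 <= s <= t -> t <= R0 -> du t / u t <= du s / u s) /\
        (forall t, 0 <= t <= R0 -> apow (p - 1) (du t / u t) <= alpha)) /\
     (alpha < 0 ->
        (forall s t, 0 <= s <= t -> t <= R0 -> du s / u s <= du t / u t) /\
        (forall t, 0 <= t <= R0 -> apow (p - 1) (du t / u t) <= - alpha))).
Proof.
  destruct (part12 p R0 alpha w D lam u du hp hR hw hwpos hw0 hu hupos) as [H1 H2].
  assert (Hzu : forall t, 0 <= t <= R0 -> zz p u du t = spow p (du t / u t)).
  { intros t Ht. unfold zz. rewrite spow_div; auto. }
  assert (Hz0 : zz p u du 0 = alpha).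
  { destruct hu as [_ [_ [Hbc _]]]. unfold zz. rewrite Hbc.
    rewrite spow_pos by (apply hupos; lra). field. apply Rgt_not_eq, Rpower_pos. }
  assert (HzR : zz p u du R0 = 0).
  { destruct hu as [_ [_ [_ HRb]]]. unfold zz. rewrite HRb, spow_0. unfold Rdiv; ring. }
  split. { intros Ha. apply (H1 Ha). }
  split. { intros Ha. apply (H2 Ha). }
  split. { intros Ha Rb lamb HRb hl. apply (part3 p R0 alpha w D lam u du Rb lamb); auto. }
  intros hlc. split.
  - intros Ha. destruct (H1 Ha) as [Hl Hd].
    assert (Hm := zz_mono p R0 alpha w D lam u du 1 hp hR hw hwpos hu hupos hlc
                   (or_introl eq_refl) ltac:(lra) ltac:(intros; specialize (Hd t H); lra)).
    split.
    + intros s t Hs Ht. apply (spow_le_inv p); auto.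
      rewrite <- !Hzu by lra. specialize (Hm s t Hs Ht). lra.
    + intros t Ht. rewrite apow_abs_spow, <- Hzu by auto.
      assert (A1 := Hm 0 t ltac:(lra) ltac:(lra)).
      assert (A2 := Hm t R0 ltac:(lra) ltac:(lra)).
      rewrite Hz0 in A1. rewrite HzR in A2.
      rewrite Rabs_right; lra.
  - intros Ha. destruct (H2 Ha) as [Hl Hd].
    assert (Hm := zz_mono p R0 alpha w D lam u du (-1) hp hR hw hwpos hu hupos hlc
                   (or_intror eq_refl) ltac:(lra) ltac:(intros; specialize (Hd t H); lra)).
    split.
    + intros s t Hs Ht. apply (spow_le_inv p); auto.
      rewrite <- !Hzu by lra. specialize (Hm s t Hs Ht). lra.
    + intros t Ht. rewrite apow_abs_spow, <- Hzu by auto.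
      assert (A1 := Hm 0 t ltac:(lra) ltac:(lra)).
      assert (A2 := Hm t R0 ltac:(lra) ltac:(lra)).
      rewrite Hz0 in A1. rewrite HzR in A2.
      rewrite Rabs_left1; lra.
Qed.
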